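(* The first-component projection $\pi\colon\mathrm{Calc}^1(\mathcal V)\to\mathrm{Mon}(\mathcal V)$, $(A,\Omega_d)\mapsto A$, has (i) a right adjoint given on objects by $A\mapsto(A,0)$ (the trivial calculus), and (ii) a left adjoint given on objects by $A\mapsto(A,\Omega^1_{A,u})$, the universal first order differential calculus over $A$.
   Context: $\mathcal V$ is a monoidal additive category ($\mathbf{Ab}$-enriched with finite biproducts, tensor additive in each variable) with finite limits and colimits, whose tensor product preserves finite colimits in each variable. A first order differential calculus over a monoid $(A,m,i)$ is an $A$-bimodule $(\Omega,\mu,\nu)$ with $d\colon A\to\Omega$ such that $dm=\nu(d\otimes 1_A)+\mu(1_A\otimes d)$ and $\mu(1_A\otimes d)$ is epi. $\mathrm{Calc}^1(\mathcal V)$ has objects pairs $(A,\Omega_d)$ with $A$ a monoid and $(\Omega_d,d)$ a first order differential calculus over $A$; a morphism $(f,g)\colon(A,\Omega_d)\to(A',\Omega_{d'})$ consists of a monoid morphism $f\colon A\to A'$ and a morphism $g\colon\Omega_d\to\Omega_{d'}$ in $\mathcal V$ that is an $A$-bimodule map $\Omega_d\to f^\ast\Omega_{d'}$ (restriction of scalars along $f$) with $g\circ d=d'\circ f$. The universal calculus $\Omega^1_{A,u}$ is the kernel $\iota_u$ of $m$ with bimodule structure from $A\otimes A$ and $d_u$ defined by $\iota_u d_u=(i\otimes 1_A)\lambda^{-1}-(1_A\otimes i)\rho^{-1}$. *)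

(* Defs.v *)
(* hom-sets are MathComp zmodTypes (Ab-enrichment). *)
From HB Require Import structures.
From mathcomp Require Import all_boot all_algebra.
Set Implicit Arguments. Unset Strict Implicit. Unset Printing Implicit Defensive.
Import GRing.Theory.
Local Open Scope ring_scope.

Record Cat := {
  ob :> Type;
  hom : ob -> ob -> zmodType;
  idm : forall a, hom a a;
  comp : forall a b c, hom b c -> hom a b -> hom a c;
  compA : forall a b c d (f : hom c d) (g : hom b c) (h : hom a b),
      comp f (comp g h) = comp (comp f g) h;
  comp1m : forall a b (f : hom a b), comp (idm b) f = f;
  compm1 : forall a b (f : hom a b), comp f (idm a) = f;
  compDl : forall a b c (f f' : hom b c) (g : hom a b),
      comp (f + f') g = comp f g + comp f' g;
  compDr : forall a b c (f : hom b c) (g g' : hom a b),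
      comp f (g + g') = comp f g + comp f g'
}.

Arguments hom {_} _ _.
Arguments idm {_} _.
Arguments comp {_ _ _ _} _ _.
Notation "f \oc g" := (comp f g) (at level 40, left associativity).

Section CatDefs.
Variable C : Cat.

Definition is_zero_object (z : C) : Prop :=
  (forall x (f : hom z x), f = 0) /\ (forall x (f : hom x z), f = 0).

Definition is_biproduct (a b s : C) : Prop :=
  exists (p1 : hom s a) (p2 : hom s b) (i1 : hom a s) (i2 : hom b s),
    [/\ p1 \oc i1 = idm a, p2 \oc i2 = idm b, p1 \oc i2 = 0, p2 \oc i1 = 0
      & i1 \oc p1 + i2 \oc p2 = idm s].

Definition is_kernel (a b : C) (f : hom a b) (k : C) (iota : hom k a) : Prop :=
  f \oc iota = 0 /\
  forall x (h : hom x a), f \oc h = 0 -> exists! u : hom x k, iota \oc u = h.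

Definition is_cokernel (a b : C) (f : hom a b) (q : C) (p : hom b q) : Prop :=
  p \oc f = 0 /\
  forall x (h : hom b x), h \oc f = 0 -> exists! u : hom q x, u \oc p = h.

Definition is_epi (a b : C) (e : hom a b) : Prop :=
  forall x (h1 h2 : hom b x), h1 \oc e = h2 \oc e -> h1 = h2.

(* additive with finite limits and colimits: zero object, binary biproducts,
   kernels and cokernels (equalizers/coequalizers are kernels/cokernels of
   differences) *)
Definition additive_finitely_complete_cocomplete : Prop :=
  (exists z : C, is_zero_object z) /\
  (forall a b : C, exists s : C, is_biproduct a b s) /\
  (forall (a b : C) (f : hom a b), exists k (iota : hom k a), is_kernel f iota) /\
  (forall (a b : C) (f : hom a b), exists q (p : hom b q), is_cokernel f p).

End CatDefs.

Record MonCat := {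
  mcat :> Cat;
  tens : mcat -> mcat -> mcat;
  tensm : forall a b c d, hom a b -> hom c d -> hom (tens a c) (tens b d);
  tun : mcat;
  asc : forall a b c, hom (tens (tens a b) c) (tens a (tens b c));
  asci : forall a b c, hom (tens a (tens b c)) (tens (tens a b) c);
  lun : forall a, hom (tens tun a) a;
  luni : forall a, hom a (tens tun a);
  run : forall a, hom (tens a tun) a;
  runi : forall a, hom a (tens a tun);
  tensm1 : forall a b, tensm (idm a) (idm b) = idm (tens a b);
  tensm_comp : forall a b c a' b' c' (f : hom b c) (f' : hom a b)
      (g : hom b' c') (g' : hom a' b'),
      tensm (f \oc f') (g \oc g')
      = tensm f g \oc tensm f' g';
  tensmDl : forall a b c d (f f' : hom a b) (g : hom c d),
      tensm (f + f') g = tensm f g + tensm f' g;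
  tensmDr : forall a b c d (f : hom a b) (g g' : hom c d),
      tensm f (g + g') = tensm f g + tensm f g';
  asc_nat : forall a b c d e f (x : hom a b) (y : hom c d) (z : hom e f),
      asc b d f \oc tensm (tensm x y) z
      = tensm x (tensm y z) \oc asc a c e;
  lun_nat : forall a b (f : hom a b),
      lun b \oc tensm (idm tun) f = f \oc lun a;
  run_nat : forall a b (f : hom a b),
      run b \oc tensm f (idm tun) = f \oc run a;
  asc_iso : forall a b c,
      asc a b c \oc asci a b c = idm _ /\ asci a b c \oc asc a b c = idm _;
  lun_iso : forall a, lun a \oc luni a = idm _ /\ luni a \oc lun a = idm _;
  run_iso : forall a, run a \oc runi a = idm _ /\ runi a \oc run a = idm _;
  pentagon : forall a b c d,
      asc a b (tens c d) \oc asc (tens a b) c d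
      = tensm (idm a) (asc b c d) \oc asc a (tens b c) d
        \oc tensm (asc a b c) (idm d);
  triangle : forall a b,
      tensm (idm a) (lun b) \oc asc a tun b
      = tensm (run a) (idm b)
}.

Arguments tens {_} _ _.
Arguments tensm {_ _ _ _ _} _ _.
Arguments tun {_}.
Arguments asc {_} _ _ _.
Arguments asci {_} _ _ _.
Arguments lun {_} _.
Arguments luni {_} _.
Arguments run {_} _.
Arguments runi {_} _.
Notation "a \ox b" := (tens a b) (at level 40, left associativity).
Notation "f \ot g" := (tensm f g) (at level 40, left associativity).

Section MonDefs.
Variable M : MonCat.

(* the tensor product preserves finite colimits in each variable; for an
   additive tensor (which automatically preserves the zero object and finite
   biproducts) this amounts to preserving cokernels in each variable *)
Definition tensor_preserves_finite_colimits : Prop :=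
  forall (x a b q : M) (f : hom a b) (p : hom b q),
    is_cokernel f p ->
    is_cokernel (idm x \ot f) (idm x \ot p) /\ is_cokernel (f \ot idm x) (p \ot idm x).

Definition is_monoid (A : M) (m : hom (A \ox A) A) (i : hom tun A) : Prop :=
  [/\ m \oc (m \ot idm A) = m \oc (idm A \ot m) \oc asc A A A,
      m \oc (i \ot idm A) = lun A
    & m \oc (idm A \ot i) = run A].

Record MonoidIn := {
  mob :> M;
  mmul : hom (mob \ox mob) mob;
  munit : hom tun mob;
  monoid_ax : is_monoid mmul munit
}.

Definition is_monoid_mor (A B : MonoidIn) (f : hom A B) : Prop :=
  f \oc mmul A = mmul B \oc (f \ot f) /\ f \oc munit A = munit B.

Definition is_bimodule (A : MonoidIn) (W : M)
    (mu : hom (A \ox W) W) (nu : hom (W \ox A) W) : Prop :=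
  [/\ mu \oc (mmul A \ot idm W) = mu \oc (idm A \ot mu) \oc asc A A W,
      mu \oc (munit A \ot idm W) = lun W,
      nu \oc (idm W \ot mmul A) \oc asc W A A = nu \oc (nu \ot idm A),
      nu \oc (idm W \ot munit A) = run W
    & nu \oc (mu \ot idm A) = mu \oc (idm A \ot nu) \oc asc A W A].

Definition is_bimodule_map (A : MonoidIn) (W W' : M)
    (mu : hom (A \ox W) W) (nu : hom (W \ox A) W)
    (mu' : hom (A \ox W') W') (nu' : hom (W' \ox A) W') (g : hom W W') : Prop :=
  g \oc mu = mu' \oc (idm A \ot g) /\ g \oc nu = nu' \oc (g \ot idm A).

Definition res_left (A B : MonoidIn) (f : hom A B) (W : M) (mu : hom (B \ox W) W)
  : hom (A \ox W) W := mu \oc (f \ot idm W).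
Definition res_right (A B : MonoidIn) (f : hom A B) (W : M) (nu : hom (W \ox B) W)
  : hom (W \ox A) W := nu \oc (idm W \ot f).

Definition is_calculus (A : MonoidIn) (W : M)
    (mu : hom (A \ox W) W) (nu : hom (W \ox A) W) (d : hom A W) : Prop :=
  [/\ is_bimodule mu nu,
      d \oc mmul A = nu \oc (d \ot idm A) + mu \oc (idm A \ot d)
    & is_epi (mu \oc (idm A \ot d))].

Definition is_calc_mor (A : MonoidIn) (W : M)
    (mu : hom (A \ox W) W) (nu : hom (W \ox A) W) (d : hom A W)
    (B : MonoidIn) (W' : M)
    (mu' : hom (B \ox W') W') (nu' : hom (W' \ox B) W') (d' : hom B W')
    (f : hom A B) (g : hom W W') : Prop :=
  [/\ is_monoid_mor f,
      is_bimodule_map mu nu (res_left f mu') (res_right f nu') g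
    & g \oc d = d' \oc f].

Definition AA_left (A : MonoidIn) : hom (A \ox (A \ox A)) (A \ox A) :=
  (mmul A \ot idm A) \oc asci A A A.
Definition AA_right (A : MonoidIn) : hom ((A \ox A) \ox A) (A \ox A) :=
  (idm A \ot mmul A) \oc asc A A A.

End MonDefs.

(* Main.v *)
Require Import Defs.
From mathcomp Require Import ssreflect ssrfun ssrbool ssralg.
From mathcomp Require Import all_boot all_algebra.
Set Implicit Arguments. Unset Strict Implicit. Unset Printing Implicit Defensive.
Import GRing.Theory.
Local Open Scope ring_scope.
Local Notation hom := Defs.hom.
Local Notation cA := Defs.compA.

Section Gen.
Variable C : Cat.
Implicit Types a b c : C.

Lemma c0l a b c (g : hom a b) : (0 : hom b c) \oc g = 0.
Proof.
have H := compDl (0 : hom b c) 0 g; rewrite addr0 in H.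
by apply: (@addrI _ (0 \oc g)); rewrite -H addr0.
Qed.
Lemma c0r a b c (f : hom b c) : f \oc (0 : hom a b) = 0.
Proof.
have H := compDr f (0 : hom a b) 0; rewrite addr0 in H.
by apply: (@addrI _ (f \oc 0)); rewrite -H addr0.
Qed.
Lemma cNl a b c (f : hom b c) (g : hom a b) : (- f) \oc g = - (f \oc g).
Proof. by apply/eqP; rewrite -addr_eq0 -compDl addNr c0l. Qed.
Lemma cNr a b c (f : hom b c) (g : hom a b) : f \oc (- g) = - (f \oc g).
Proof. by apply/eqP; rewrite -addr_eq0 -compDr addNr c0r. Qed.
Lemma cBl a b c (f f' : hom b c) (g : hom a b) : (f - f') \oc g = f \oc g - f' \oc g.
Proof. by rewrite compDl cNl. Qed.
Lemma cBr a b c (f : hom b c) (g g' : hom a b) : f \oc (g - g') = f \oc g - f \oc g'.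
Proof. by rewrite compDr cNr. Qed.

Lemma kernel_mono a b (f : hom a b) k (iota : hom k a) :
  is_kernel f iota -> forall x (u1 u2 : hom x k), iota \oc u1 = iota \oc u2 -> u1 = u2.
Proof.
move=> [fi0 H] x u1 u2 E.
have h0 : f \oc (iota \oc u1) = 0 by rewrite Defs.compA fi0 c0l.
have [u [_ Hu]] := H x _ h0.
by rewrite -(Hu u1 erefl) (Hu u2 (esym E)).
Qed.

Lemma split_epi a b (e : hom a b) (s : hom b a) : e \oc s = idm b -> is_epi e.
Proof.
move=> es x h1 h2 E.
by rewrite -(compm1 h1) -(compm1 h2) -es !Defs.compA E.
Qed.

End Gen.

Section Mon.
Variable V : MonCat.
Lemma t0l (a b c d : V) (g : hom c d) : (0 : hom a b) \ot g = 0.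
Proof.
have H := tensmDl (0 : hom a b) 0 g; rewrite addr0 in H.
by apply: (@addrI _ (0 \ot g)); rewrite -H addr0.
Qed.
Lemma t0r (a b c d : V) (f : hom a b) : f \ot (0 : hom c d) = 0.
Proof.
have H := tensmDr f (0 : hom c d) 0; rewrite addr0 in H.
by apply: (@addrI _ (f \ot 0)); rewrite -H addr0.
Qed.
Lemma tNl (a b c d : V) (f : hom a b) (g : hom c d) : (- f) \ot g = - (f \ot g).
Proof. by apply/eqP; rewrite -addr_eq0 -tensmDl addNr t0l. Qed.
Lemma tNr (a b c d : V) (f : hom a b) (g : hom c d) : f \ot (- g) = - (f \ot g).
Proof. by apply/eqP; rewrite -addr_eq0 -tensmDr addNr t0r. Qed.
Lemma tBl (a b c d : V) (f f' : hom a b) (g : hom c d) : (f - f') \ot g = f \ot g - f' \ot g.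
Proof. by rewrite tensmDl tNl. Qed.
Lemma tBr (a b c d : V) (f : hom a b) (g g' : hom c d) : f \ot (g - g') = f \ot g - f \ot g'.
Proof. by rewrite tensmDr tNr. Qed.

Lemma tcl (a b c x : V) (f : hom b c) (f' : hom a b) :
  (f \oc f') \ot idm x = (f \ot idm x) \oc (f' \ot idm x).
Proof. by rewrite -tensm_comp comp1m. Qed.
Lemma tcr (a b c x : V) (f : hom b c) (f' : hom a b) :
  idm x \ot (f \oc f') = (idm x \ot f) \oc (idm x \ot f').
Proof. by rewrite -tensm_comp comp1m. Qed.
Lemma tsplit1 (a b c d : V) (f : hom a b) (g : hom c d) :
  f \ot g = (f \ot idm d) \oc (idm a \ot g).
Proof. by rewrite -tensm_comp comp1m compm1. Qed.
Lemma tsplit2 (a b c d : V) (f : hom a b) (g : hom c d) :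
  f \ot g = (idm b \ot g) \oc (f \ot idm c).
Proof. by rewrite -tensm_comp comp1m compm1. Qed.
End Mon.


Section K.
Variable V : MonCat.

Lemma cancel_r (C : Cat) (a b c : C) (X Y : hom b c) (Q : hom a b) (Qi : hom b a) :
  X \oc Q = Y \oc Q -> Q \oc Qi = idm b -> X = Y.
Proof. by move=> E QQ; rewrite -(compm1 X) -(compm1 Y) -QQ !Defs.compA E. Qed.
Lemma cancel_l (C : Cat) (a b c : C) (X Y : hom a b) (Q : hom b c) (Qi : hom c b) :
  Q \oc X = Q \oc Y -> Qi \oc Q = idm b -> X = Y.
Proof. by move=> E QQ; rewrite -(comp1m X) -(comp1m Y) -QQ -!Defs.compA E. Qed.

Lemma pentagonR (a b c d : V) :
  asc a b (c \ox d) \oc asc (a \ox b) c d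
  = (idm a \ot asc b c d) \oc (asc a (b \ox c) d \oc (asc a b c \ot idm d)).
Proof. by rewrite Defs.compA pentagon. Qed.

Lemma tens_inj_r (a b : V) (f g : hom a b) : f \ot idm tun = g \ot idm tun -> f = g.
Proof.
move=> E; apply: (cancel_r (Q := run a) (Qi := runi a)); last exact: (run_iso a).1.
by rewrite -!run_nat E.
Qed.
Lemma tens_inj_l (a b : V) (f g : hom a b) : idm tun \ot f = idm tun \ot g -> f = g.
Proof.
move=> E; apply: (cancel_r (Q := lun a) (Qi := luni a)); last exact: (lun_iso a).1.
by rewrite -!lun_nat E.
Qed.

Lemma kellyR (a b : V) : (idm a \ot run b) \oc asc a b tun = run (a \ox b).
Proof.
apply: tens_inj_r.
apply: (cancel_l (Q := asc a b tun) (Qi := asci a b tun)); last exact: (asc_iso a b tun).2.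
rewrite -triangle -[idm (a \ox b)]tensm1 Defs.compA asc_nat -Defs.compA pentagon.
rewrite !Defs.compA -tcr triangle -asc_nat -Defs.compA -tcl.
by [].
Qed.

Lemma kellyL (a b : V) : lun (a \ox b) \oc asc tun a b = lun a \ot idm b.
Proof.
apply: tens_inj_l.
pose Q := asc tun (tun \ox a) b \oc (asc tun tun a \ot idm b).
pose Qi := (asci tun tun a \ot idm b) \oc asci tun (tun \ox a) b.
apply: (cancel_r (Q := Q) (Qi := Qi)); last first.
  rewrite /Q /Qi -Defs.compA [X in asc _ _ _ \oc X]Defs.compA -tcl (asc_iso _ _ _).1.
  by rewrite tensm1 comp1m (asc_iso _ _ _).1.
rewrite /Q tcr -!Defs.compA -pentagonR Defs.compA triangle.
rewrite -[idm (a \ox b)]tensm1.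
transitivity (asc tun a b \oc ((run tun \ot idm a) \ot idm b)); first by rewrite asc_nat.
by rewrite [RHS]Defs.compA -asc_nat -Defs.compA -tcl triangle.
Qed.
End K.


Section H.
Variable V : MonCat.

Lemma iso_r (C : Cat) (a b c : C) (X : hom b c) (Y : hom a c) (Q : hom a b) (Qi : hom b a) :
  X \oc Q = Y -> Q \oc Qi = idm b -> X = Y \oc Qi.
Proof. by move=> <- QQ; rewrite -cA QQ compm1. Qed.
Lemma iso_l (C : Cat) (a b c : C) (X : hom a b) (Y : hom a c) (Q : hom b c) (Qi : hom c b) :
  Q \oc X = Y -> Qi \oc Q = idm b -> X = Qi \oc Y.
Proof. by move=> <- QQ; rewrite cA QQ comp1m. Qed.

Lemma tisol (a b x : V) (f : hom a b) (g : hom b a) :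
  f \oc g = idm b -> (f \ot idm x) \oc (g \ot idm x) = idm (b \ox x).
Proof. by move=> E; rewrite -tcl E tensm1. Qed.
Lemma tisor (a b x : V) (f : hom a b) (g : hom b a) :
  f \oc g = idm b -> (idm x \ot f) \oc (idm x \ot g) = idm (x \ox b).
Proof. by move=> E; rewrite -tcr E tensm1. Qed.

Lemma asci_nat (a b c d e f : V) (x : hom a b) (y : hom c d) (z : hom e f) :
  asci b d f \oc (x \ot (y \ot z)) = (x \ot y \ot z) \oc asci a c e.
Proof.
apply: (iso_r (Q := asc a c e)); last exact: (asc_iso _ _ _).1.
rewrite -cA -asc_nat cA (asc_iso _ _ _).2 comp1m //.
Qed.

Lemma luni_nat (a b : V) (f : hom a b) : luni b \oc f = (idm tun \ot f) \oc luni a.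
Proof.
apply: (iso_r (Q := lun a)); last exact: (lun_iso _).1.
by rewrite -cA -lun_nat cA (lun_iso _).2 comp1m.
Qed.
Lemma runi_nat (a b : V) (f : hom a b) : runi b \oc f = (f \ot idm tun) \oc runi a.
Proof.
apply: (iso_r (Q := run a)); last exact: (run_iso _).1.
by rewrite -cA -run_nat cA (run_iso _).2 comp1m.
Qed.

Lemma pent_inv1 (a b c d : V) :
  asci a (b \ox c) d \oc (idm a \ot asci b c d) \oc asc a b (c \ox d)
  = (asc a b c \ot idm d) \oc asci (a \ox b) c d.
Proof.
apply: (iso_r (Q := asc (a \ox b) c d)); last exact: (asc_iso _ _ _).1.
rewrite -cA pentagon !cA -[X in X \oc asc _ _ _ \oc _]cA tisor; last exact: (asc_iso _ _ _).2.
by rewrite compm1 (asc_iso _ _ _).2 comp1m.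
Qed.

Lemma pent2 (a b c d : V) :
  asci a b (c \ox d) \oc (idm a \ot asc b c d) \oc asc a (b \ox c) d
  = asc (a \ox b) c d \oc (asci a b c \ot idm d).
Proof.
apply: (iso_r (Q := asc a b c \ot idm d)); last exact: tisol (asc_iso _ _ _).1.
by rewrite -!cA -pentagonR cA (asc_iso _ _ _).2 comp1m.
Qed.

Lemma kellyL' (a b : V) : (lun a \ot idm b) \oc asci tun a b = lun (a \ox b).
Proof.
symmetry; apply: (iso_r (Q := asc tun a b)); last exact: (asc_iso _ _ _).1.
by rewrite kellyL.
Qed.
Lemma kellyR' (a b : V) : run (a \ox b) \oc asci a b tun = idm a \ot run b.
Proof.
symmetry; apply: (iso_r (Q := asc a b tun)); last exact: (asc_iso _ _ _).1.
by rewrite kellyR.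
Qed.
Lemma kellyLi (a b : V) : asc tun a b \oc (luni a \ot idm b) = luni (a \ox b).
Proof.
rewrite -[RHS]comp1m; apply: (iso_r (Q := lun (a \ox b))); last exact: (lun_iso _).1.
rewrite -kellyL' !cA -[X in X \oc asci _ _ _]cA tisol; last exact: (lun_iso _).2.
by rewrite compm1 (asc_iso _ _ _).1.
Qed.
Lemma kellyRi (a b : V) : asci a b tun \oc (idm a \ot runi b) = runi (a \ox b).
Proof.
rewrite -[RHS]comp1m; apply: (iso_r (Q := run (a \ox b))); last exact: (run_iso _).1.
rewrite -kellyR !cA -[X in X \oc asc _ _ _]cA tisor; last exact: (run_iso _).2.
by rewrite compm1 (asc_iso _ _ _).2.
Qed.

Lemma tc2 (a b c a' b' c' : V) (f : hom b c) (f' : hom a b) (g : hom b' c') (g' : hom a' b') :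
  (f \ot g) \oc (f' \ot g') = (f \oc f') \ot (g \oc g').
Proof. by rewrite tensm_comp. Qed.

Lemma dunit (B : MonoidIn V) (W : V) (mu : hom (B \ox W) W) (nu : hom (W \ox B) W)
  (d : hom B W) : is_calculus mu nu d -> d \oc munit B = 0.
Proof.
case=> [[_ Bl _ Br _] Ld _].
have [_ Ml Mr] := monoid_ax B.
set x := d \oc munit B.
have E1 : x \oc lun tun = nu \oc (d \ot idm B) \oc (munit B \ot munit B)
    + mu \oc (idm B \ot d) \oc (munit B \ot munit B).
  have -> : x \oc lun tun = d \oc mmul B \oc (munit B \ot munit B).
    by rewrite /x -cA -lun_nat -Ml -!cA -tsplit1.
  by rewrite Ld compDl.
have E3 : nu \oc (d \ot idm B) \oc (munit B \ot munit B) = x \oc run tun.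
  by rewrite -cA tc2 comp1m (tsplit2 x) cA Br run_nat.
have E4 : mu \oc (idm B \ot d) \oc (munit B \ot munit B) = x \oc lun tun.
  by rewrite -cA tc2 comp1m (tsplit1 _ x) cA Bl lun_nat.
have E : x \oc lun tun = x \oc run tun + x \oc lun tun.
  by rewrite {1}E1 E3 E4.
have E2 : x \oc run tun = 0.
  by apply: (@addIr _ (x \oc lun tun)); rewrite add0r -E.
by rewrite -[x]compm1 -(run_iso _).1 cA E2 c0l.
Qed.

Lemma tLl (a b c a' b' : V) (f : hom b c) (f' : hom a b) (g : hom a' b') :
  (f \oc f') \ot g = (f \ot idm b') \oc (f' \ot g).
Proof. by rewrite tc2 comp1m. Qed.
Lemma tLr (a b c a' b' : V) (f : hom b c) (f' : hom a b) (g : hom a' b') :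
  (f \oc f') \ot g = (f \ot g) \oc (f' \ot idm a').
Proof. by rewrite tc2 compm1. Qed.
Lemma tRl (a b a' b' c' : V) (f : hom a b) (g : hom b' c') (g' : hom a' b') :
  f \ot (g \oc g') = (idm b \ot g) \oc (f \ot g').
Proof. by rewrite tc2 comp1m. Qed.
Lemma tRr (a b a' b' c' : V) (f : hom a b) (g : hom b' c') (g' : hom a' b') :
  f \ot (g \oc g') = (f \ot g) \oc (idm a \ot g').
Proof. by rewrite tc2 compm1. Qed.
End H.


Section M.
Variable V : MonCat.
Variable A : MonoidIn V.
Local Notation m := (mmul A).
Local Notation i := (munit A).
Variables (K : V) (iota : hom K (A \ox A)) (mu_u : hom (A \ox K) K)
  (nu_u : hom (K \ox A) K) (d_u : hom A K).
Hypothesis Hk : is_kernel m iota.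
Hypothesis Hl : iota \oc mu_u = AA_left A \oc (idm A \ot iota).
Hypothesis Hr : iota \oc nu_u = AA_right A \oc (iota \ot idm A).
Hypothesis Hd : iota \oc d_u = (i \ot idm A) \oc luni A - (idm A \ot i) \oc runi A.

Lemma Ma : m \oc (m \ot idm A) = m \oc (idm A \ot m) \oc asc A A A.
Proof. by case: (monoid_ax A). Qed.
Lemma Ml : m \oc (i \ot idm A) = lun A.
Proof. by case: (monoid_ax A). Qed.
Lemma Mr : m \oc (idm A \ot i) = run A.
Proof. by case: (monoid_ax A). Qed.

Lemma B2 : mu_u \oc (i \ot idm K) = lun K.
Proof.
apply: (kernel_mono Hk); rewrite cA Hl /AA_left -!cA -tsplit2 (tsplit1 i iota).
rewrite -[idm (A \ox A)]tensm1 [X in _ \oc X]cA asci_nat !cA -tcl Ml kellyL' lun_nat //.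
Qed.

Lemma B4 : nu_u \oc (idm K \ot i) = run K.
Proof.
apply: (kernel_mono Hk); rewrite cA Hr /AA_right -!cA -tsplit1 (tsplit2 iota i).
rewrite -[idm (A \ox A)]tensm1 [X in _ \oc X]cA asc_nat !cA -tcr Mr kellyR run_nat //.
Qed.

Ltac show := match goal with |- ?G => idtac G end.
Lemma B1 : mu_u \oc (m \ot idm K) = mu_u \oc (idm A \ot mu_u) \oc asc A A K.
Proof.
apply: (kernel_mono Hk).
transitivity (((m \oc (m \ot idm A)) \ot idm A) \oc (asci (A \ox A) A A \oc (idm (A \ox A) \ot iota))).
  rewrite cA Hl /AA_left -!cA -tsplit2 (tsplit1 m iota) -[idm (A \ox A)]tensm1.
  rewrite [X in _ \oc X]cA asci_nat !cA -tcl //.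
rewrite Ma ![in RHS]cA Hl /AA_left -!cA.
rewrite (cA (idm A \ot iota)) -tcr Hl /AA_left !tcr -!cA.
rewrite -asc_nat (cA (asci A A A)) asci_nat -!cA.
rewrite -[idm (A \ox A)]tensm1 !tcl -!cA (cA (asc A A A \ot idm A)) -pent_inv1 -!cA //.
Qed.

Lemma B3 : nu_u \oc (idm K \ot m) \oc asc K A A = nu_u \oc (nu_u \ot idm A).
Proof.
apply: (kernel_mono Hk).
transitivity ((idm A \ot (m \oc (m \ot idm A))) \oc (asc A (A \ox A) A \oc ((asc A A A \ot idm A) \oc ((iota \ot idm A) \ot idm A)))).
  rewrite ![in LHS]cA Hr /AA_right -!cA (cA (iota \ot idm A)) -tsplit1 (tsplit2 iota m).
  rewrite -[idm (A \ox A)]tensm1 -!cA (cA (asc A A A)) asc_nat -!cA -asc_nat.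
  rewrite (cA (asc A A (A \ox A))) pentagonR -!cA !(cA (idm A \ot _)) -!tcr Ma.
  by rewrite !cA -tcr.
rewrite [in RHS]cA Hr /AA_right -!cA -(tcl _ iota nu_u) Hr /AA_right !tcl -!cA.
rewrite (cA (asc A A A)) asc_nat -!cA (cA (idm A \ot m)) -tcr //.
Qed.

Lemma B5 : nu_u \oc (mu_u \ot idm A) = mu_u \oc (idm A \ot nu_u) \oc asc A K A.
Proof.
apply: (kernel_mono Hk).
transitivity ((m \ot m) \oc (asc (A \ox A) A A \oc ((asci A A A \ot idm A) \oc ((idm A \ot iota) \ot idm A)))).
  rewrite cA Hr /AA_right -!cA -(tcl _ iota mu_u) Hl /AA_left !tcl -!cA.
  rewrite (cA (asc A A A)) asc_nat tensm1 -!cA (cA (idm A \ot m)) -tsplit2 //.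
rewrite [in RHS]cA [in RHS]cA Hl /AA_left -!cA (cA (idm A \ot iota)) -tcr Hr /AA_right !tcr -!cA.
rewrite (cA (asci A A A)) asci_nat tensm1 -!cA (cA (m \ot idm A)) -tsplit1 -asc_nat.
rewrite (cA (asci _ _ _)) (cA (asci _ _ _ \oc _)) pent2 -!cA //.
Qed.

Lemma triangle' (a b : V) : (run a \ot idm b) \oc asci a tun b = idm a \ot lun b.
Proof.
symmetry; apply: (iso_r (Q := asc a tun b)); last exact: (asc_iso _ _ _).1.
by rewrite triangle.
Qed.

Lemma L1 : (idm A \ot m) \oc asc A A A \oc (((i \ot idm A) \oc luni A) \ot idm A)
  = (i \ot idm A) \oc luni A \oc m.
Proof.
rewrite tcl -!cA (cA (asc _ _ _)) asc_nat tensm1 -!cA (cA (idm A \ot m)) -tsplit2.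
rewrite kellyLi luni_nat cA -tsplit1 //.
Qed.

Lemma L2 : (idm A \ot m) \oc asc A A A \oc (((idm A \ot i) \oc runi A) \ot idm A) = idm _.
Proof.
rewrite tcl -!cA (cA (asc _ _ _)) asc_nat -!cA (cA (idm A \ot m)) -tcr Ml.
by rewrite (cA (idm A \ot lun A)) triangle tisol //; exact: (run_iso _).1.
Qed.

Lemma L3 : (m \ot idm A) \oc asci A A A \oc (idm A \ot ((i \ot idm A) \oc luni A)) = idm _.
Proof.
rewrite tcr -!cA (cA (asci _ _ _)) asci_nat -!cA (cA (m \ot idm A)) -tcl Mr.
by rewrite (cA (run A \ot idm A)) triangle' tisor //; exact: (lun_iso _).1.
Qed.

Lemma L4 : (m \ot idm A) \oc asci A A A \oc (idm A \ot ((idm A \ot i) \oc runi A))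
  = (idm A \ot i) \oc runi A \oc m.
Proof.
rewrite tcr -!cA (cA (asci _ _ _)) asci_nat tensm1 -!cA (cA (m \ot idm A)) -tsplit1.
rewrite kellyRi runi_nat cA -tsplit2 //.
Qed.

Lemma Leib : d_u \oc m = nu_u \oc (d_u \ot idm A) + mu_u \oc (idm A \ot d_u).
Proof.
apply: (kernel_mono Hk).
rewrite compDr (cA iota d_u) Hd cBl.
rewrite (cA iota nu_u) Hr /AA_right -(cA (_ \oc asc A A A)) -(tcl _ iota d_u) Hd tBl cBr.
rewrite (cA iota mu_u) Hl /AA_left -(cA (_ \oc asci A A A)) -(tcr _ iota d_u) Hd tBr cBr.
by rewrite L1 L2 L3 L4 addrA subrK.
Qed.

Lemma muD : iota \oc (mu_u \oc (idm A \ot d_u)) = idm _ - (idm A \ot i) \oc runi A \oc m.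
Proof.
rewrite (cA iota mu_u) Hl /AA_left -(cA (_ \oc asci A A A)) -(tcr _ iota d_u) Hd tBr cBr.
by rewrite L3 L4.
Qed.

Lemma epi_u : is_epi (mu_u \oc (idm A \ot d_u)).
Proof.
apply: (split_epi (s := iota)); apply: (kernel_mono Hk).
rewrite cA muD cBl comp1m compm1 -!cA.
by case: Hk => -> _; rewrite !c0r subr0.
Qed.

Lemma calc_u : is_calculus mu_u nu_u d_u.
Proof. split; [split | |]; [exact: B1|exact: B2|exact: B3|exact: B4|exact: B5|exact: Leib|exact: epi_u]. Qed.

Section U.
Variables (B : MonoidIn V) (W : V) (mu : hom (B \ox W) W) (nu : hom (W \ox B) W)
  (d : hom B W).
Hypothesis HW : is_calculus mu nu d.
Variable f : hom A B.
Hypothesis Hf : is_monoid_mor f.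

Local Definition G := mu \oc (f \ot (d \oc f)).
Local Definition gg := G \oc iota.

Lemma gd : gg \oc d_u = d \oc f.
Proof.
case: HW => [[_ Bl _ _ _] _ _].
have T1 : G \oc ((i \ot idm A) \oc luni A) = d \oc f.
  rewrite /G cA -(cA mu) tc2 compm1 Hf.2 (tsplit1 (munit B) (d \oc f)) cA Bl.
  by rewrite lun_nat -cA (lun_iso _).1 compm1.
have T2 : G \oc ((idm A \ot i) \oc runi A) = 0.
  rewrite /G cA -(cA mu) tc2 compm1 -(cA d f) Hf.2 (dunit HW) t0r c0r c0l //.
by rewrite /gg -cA Hd cBr T1 T2 subr0.
Qed.

Lemma K1 : G \oc (m \ot idm A)
  = mu \oc (idm B \ot mu) \oc (f \ot (f \ot (d \oc f))) \oc asc A A A.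
Proof.
case: HW => [[BW1 _ _ _ _] _ _].
rewrite /G -cA tc2 compm1 Hf.1 tLl cA BW1 -(cA _ (asc B B W)) asc_nat !cA //.
Qed.

Lemma gmu : gg \oc mu_u = res_left f mu \oc (idm A \ot gg).
Proof.
transitivity (mu \oc (idm B \ot mu) \oc ((f \ot (f \ot (d \oc f))) \oc (idm A \ot iota))).
  rewrite /gg -cA Hl /AA_left !cA K1 -!cA (cA (asc A A A)) (asc_iso _ _ _).1 comp1m //.
rewrite /res_left /gg /G -[in RHS]cA [in RHS]tc2 compm1 comp1m -[in RHS](cA mu) [in RHS]tRl -tRr cA //.
Qed.

Lemma K2 : G \oc (idm A \ot m) \oc asc A A A
  = nu \oc (idm W \ot f) \oc (G \ot idm A) + G \oc (m \ot idm A).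
Proof.
case: HW => [[BW1 _ _ _ BW5] Ld _].
rewrite /G -(cA mu) tc2 compm1 -(cA d f m) Hf.1 (cA d) Ld compDl tensmDr compDr compDl.
congr (_ + _).
  rewrite -(cA nu) tc2 comp1m tRl -!cA -asc_nat !cA -BW5 -cA -tLl.
  by rewrite -cA -tsplit2.
rewrite -(cA mu (idm B \ot d)) tc2 comp1m tRl -!cA -asc_nat !cA -BW1 -cA -tLl -Hf.1 tLr cA //.
Qed.

Lemma gnu : gg \oc nu_u = res_right f nu \oc (gg \ot idm A).
Proof.
rewrite /gg /res_right -cA Hr /AA_right !cA K2 compDl.
rewrite -(cA G (m \ot idm A)) -tcl; case: Hk => -> _; rewrite t0l c0r addr0.
by rewrite -cA -tcl.
Qed.

Lemma calc_mor_g : is_calc_mor mu_u nu_u d_u mu nu d f gg.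
Proof. split=> //; [split; [exact: gmu | exact: gnu] | exact: gd]. Qed.

Lemma uniq_g (g1 g2 : hom K W) :
  is_calc_mor mu_u nu_u d_u mu nu d f g1 -> is_calc_mor mu_u nu_u d_u mu nu d f g2 -> g1 = g2.
Proof.
move=> [_ [H1 _] D1] [_ [H2 _] D2].
apply: epi_u; rewrite !cA H1 H2 /res_left -!cA -!tcr D1 D2 //.
Qed.
End U.
End M.

Theorem proposition3p22 (V : MonCat)
    (hV : additive_finitely_complete_cocomplete V)
    (htens : tensor_preserves_finite_colimits V) :
  (* (i) right adjoint  B |-> (B, 0)  (universal arrows with counit eps_B) *)
  (forall (B : MonoidIn V) (Z : V), is_zero_object Z ->
     is_calculus (0 : hom (B \ox Z) Z) (0 : hom (Z \ox B) Z) (0 : hom B Z) /\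
     exists eps : hom B B, is_monoid_mor eps /\
       forall (A : MonoidIn V) (W : V) (mu : hom (A \ox W) W) (nu : hom (W \ox A) W)
              (d : hom A W),
         is_calculus mu nu d ->
         forall f : hom A B, is_monoid_mor f ->
           (exists (f' : hom A B) (g : hom W Z),
               is_calc_mor mu nu d (0 : hom (B \ox Z) Z) (0 : hom (Z \ox B) Z) (0 : hom B Z) f' g /\ eps \oc f' = f) /\
           (forall (f1 f2 : hom A B) (g1 g2 : hom W Z),
               is_calc_mor mu nu d (0 : hom (B \ox Z) Z) (0 : hom (Z \ox B) Z) (0 : hom B Z) f1 g1 -> eps \oc f1 = f ->
               is_calc_mor mu nu d (0 : hom (B \ox Z) Z) (0 : hom (Z \ox B) Z) (0 : hom B Z) f2 g2 -> eps \oc f2 = f ->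
               f1 = f2 /\ g1 = g2)) /\
  (* (ii) left adjoint  A |-> (A, Omega^1_{A,u})  (universal arrows with unit eta_A) *)
  (forall (A : MonoidIn V) (K : V) (iota : hom K (A \ox A))
          (mu_u : hom (A \ox K) K) (nu_u : hom (K \ox A) K) (d_u : hom A K),
     is_kernel (mmul A) iota ->
     iota \oc mu_u = AA_left A \oc (idm A \ot iota) ->
     iota \oc nu_u = AA_right A \oc (iota \ot idm A) ->
     iota \oc d_u = (munit A \ot idm A) \oc luni A - (idm A \ot munit A) \oc runi A ->
     is_calculus mu_u nu_u d_u /\
     exists eta : hom A A, is_monoid_mor eta /\
       forall (B : MonoidIn V) (W : V) (mu : hom (B \ox W) W) (nu : hom (W \ox B) W)
              (d : hom B W),
         is_calculus mu nu d ->
         forall f : hom A B, is_monoid_mor f ->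
           (exists (f' : hom A B) (g : hom K W),
               is_calc_mor mu_u nu_u d_u mu nu d f' g /\ f' \oc eta = f) /\
           (forall (f1 f2 : hom A B) (g1 g2 : hom K W),
               is_calc_mor mu_u nu_u d_u mu nu d f1 g1 -> f1 \oc eta = f ->
               is_calc_mor mu_u nu_u d_u mu nu d f2 g2 -> f2 \oc eta = f ->
               f1 = f2 /\ g1 = g2)).
Proof.
split.
  move=> B Z hZ.
  have homZ : forall x (f g : hom x Z), f = g.
    by move=> x f g; rewrite (hZ.2 x f) (hZ.2 x g).
  split.
    split; [split|..]; try apply: homZ.
    by move=> x h1 h2 _; rewrite (hZ.1 x h1) (hZ.1 x h2).
  exists (idm B); split; first by split; rewrite comp1m ?tensm1 ?compm1.
  move=> A W mu nu d _ f Hf; split.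
    exists f, 0; split; last by rewrite comp1m.
    by split; [exact: Hf | split; apply: homZ | apply: homZ].
  move=> f1 f2 g1 g2 _ E1 _ E2; split; last by apply: homZ.
  by rewrite -(comp1m f1) E1 -E2 comp1m.
move=> A K iota mu_u nu_u d_u Hk Hl Hr Hd; split; first exact: calc_u Hk Hl Hr Hd.
exists (idm A); split; first by split; rewrite comp1m ?tensm1 ?compm1.
move=> B W mu nu d HW f Hf; split.
  exists f; eexists; split; [exact: (calc_mor_g Hk Hl Hr Hd HW Hf) | exact: compm1].
move=> f1 f2 g1 g2 C1 E1 C2 E2; rewrite compm1 in E1; rewrite compm1 in E2.
subst f1 f2; split=> //; exact: (uniq_g Hk Hl Hd C1 C2).
Qed.
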